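(* Let $B,C\subset\mathbb{R}^d$ be closed convex sets with nonempty interiors and differentiable boundaries, with $B\cap C\neq\emptyset$. Let $x\in\partial B\cap\partial C$ be such that $n_B(x)\neq n_C(x)$, where $n_B(x),n_C(x)$ are the unit outer normals of $B$ and $C$ at $x$. Then there exist a point $a\in\operatorname{int}B\cap\{w:(w-x)\cdot n_C(x)>0\}$ and $\delta,s>0$ such that $$K\Big(x,\tfrac{a-x}{|a-x|},\delta,s\Big)\subset\operatorname{int}B\cup\{x\}\quad\text{and}\quad K\Big(x,-\tfrac{a-x}{|a-x|},\delta,s\Big)\subset\operatorname{int}C\cup\{x\}.$$
   Context: For $x_0,\xi\in\mathbb{R}^d$ with $|\xi|=1$, $\delta\in[0,2]$ and $s>0$: $K(x_0,\xi,\delta)=\{x\in\mathbb{R}^d\setminus\{x_0\}:\frac{x-x_0}{|x-x_0|}\cdot\xi\ge1-\delta\}\cup\{x_0\}$ and $K(x_0,\xi,\delta,s)=K(x_0,\xi,\delta)\cap B(x_0,s)$, where $B(x_0,s)$ is the open ball. *)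

(* Defs.v *)
From HB Require Import structures.
From mathcomp Require Import all_boot all_order all_algebra.
From mathcomp Require Import all_classical all_reals all_analysis.
Set Implicit Arguments. Unset Strict Implicit. Unset Printing Implicit Defensive.
Import Order.TTheory GRing.Theory Num.Theory.
Import numFieldNormedType.Exports.
Local Open Scope classical_set_scope.
Local Open Scope ring_scope.

Section Defs.
Context {R : realType} {d : nat}.
Notation V := 'rV[R]_d.

Definition dotv (u v : V) : R := \sum_(i < d) u ord0 i * v ord0 i.
Definition enorm (u : V) : R := Num.sqrt (dotv u u).

Definition bdry (B : set V) : set V := closure B `\` interior B.

Definition outer_normal (B : set V) (x n : V) : Prop :=
  enorm n = 1 /\ forall y, B y -> dotv (y - x) n <= 0.

(* differentiable (smooth) boundary of a convex body: at every boundary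
   point the unit outer normal exists and is unique *)
Definition smooth_boundary (B : set V) : Prop :=
  forall x, bdry B x -> exists! n, outer_normal B x n.

Definition eball (x0 : V) (s : R) : set V := [set x | enorm (x - x0) < s].

Definition cone (x0 xi : V) (delta : R) : set V :=
  [set x | x = x0 \/ (x <> x0 /\ dotv ((enorm (x - x0))^-1 *: (x - x0)) xi >= 1 - delta)].

Definition cone_s (x0 xi : V) (delta s : R) : set V :=
  cone x0 xi delta `&` eball x0 s.
End Defs.

(* Main.v *)
Require Import Defs.
From HB Require Import structures.
From mathcomp Require Import all_boot all_order all_algebra.
From mathcomp Require Import all_classical all_reals all_analysis.
From mathcomp Require Import lra ring.
Import Order.TTheory GRing.Theory Num.Theory.
Import numFieldNormedType.Exports.
Local Open Scope classical_set_scope.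
Local Open Scope ring_scope.



Section Dot.
Context {R : realType} {d : nat}.
Implicit Types (u v w : 'rV[R]_d) (a : R).

Lemma dotvC u v : dotv u v = dotv v u.
Proof. by apply: eq_bigr => i _; rewrite mulrC. Qed.

Lemma dotvDl u w v : dotv (u + w) v = dotv u v + dotv w v.
Proof. by rewrite /dotv -big_split; apply: eq_bigr => i _; rewrite mxE mulrDl. Qed.

Lemma dotvZl a u v : dotv (a *: u) v = a * dotv u v.
Proof. by rewrite /dotv mulr_sumr; apply: eq_bigr => i _; rewrite mxE mulrA. Qed.

Lemma dotvNl u v : dotv (- u) v = - dotv u v.
Proof. by rewrite -scaleN1r dotvZl mulN1r. Qed.

Lemma dotvBl u w v : dotv (u - w) v = dotv u v - dotv w v.
Proof. by rewrite dotvDl dotvNl. Qed.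

Lemma dotvDr u w v : dotv v (u + w) = dotv v u + dotv v w.
Proof. by rewrite dotvC dotvDl !(dotvC v). Qed.

Lemma dotvZr a u v : dotv v (a *: u) = a * dotv v u.
Proof. by rewrite dotvC dotvZl dotvC. Qed.

Lemma dotvNr u v : dotv v (- u) = - dotv v u.
Proof. by rewrite dotvC dotvNl dotvC. Qed.

Lemma dotvBr u w v : dotv v (u - w) = dotv v u - dotv v w.
Proof. by rewrite dotvDr dotvNr. Qed.

Lemma dotv0l v : dotv 0 v = 0.
Proof. by rewrite -(scale0r 0) dotvZl mul0r. Qed.

Lemma dotvv_ge0 u : 0 <= dotv u u.
Proof. by apply: sumr_ge0 => i _; rewrite -expr2 sqr_ge0. Qed.

Lemma dotvv_eq0 u : dotv u u = 0 -> u = 0.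
Proof.
move=> h; apply/rowP => i; rewrite mxE.
have hp : forall j : 'I_d, xpredT j -> 0 <= u ord0 j * u ord0 j.
  by move=> j _; rewrite -expr2 sqr_ge0.
have := psumr_eq0P hp h (i:=i) isT.
by move=> /eqP; rewrite mulf_eq0 orbb => /eqP.
Qed.

Lemma enorm_ge0 u : 0 <= enorm u.
Proof. exact: sqrtr_ge0. Qed.

Lemma enorm_sq u : enorm u ^+ 2 = dotv u u.
Proof. by rewrite sqr_sqrtr // dotvv_ge0. Qed.

Lemma enorm_eq0 u : enorm u = 0 -> u = 0.
Proof. by move=> h; apply: dotvv_eq0; rewrite -enorm_sq h expr0n. Qed.

Lemma enorm0 : enorm (0 : 'rV[R]_d) = 0.
Proof. by rewrite /enorm dotv0l sqrtr0. Qed.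

Lemma enormZ a u : enorm (a *: u) = `|a| * enorm u.
Proof.
by rewrite /enorm dotvZl dotvZr mulrA -expr2 sqrtrM ?sqr_ge0 // sqrtr_sqr.
Qed.

Lemma enormN u : enorm (- u) = enorm u.
Proof. by rewrite -scaleN1r enormZ normrN normr1 mul1r. Qed.

Lemma enormB u v : enorm (u - v) = enorm (v - u).
Proof. by rewrite -enormN opprB. Qed.

Lemma cs_sq u v : dotv u v ^+ 2 <= dotv u u * dotv v v.
Proof.
set a := dotv v v; set b := dotv u v.
have h := dotvv_ge0 (a *: u - b *: v).
rewrite !(dotvBl, dotvBr, dotvZl, dotvZr) (dotvC v u) -/a -/b in h.
have a0 : 0 <= a by apply: dotvv_ge0.
have [az|ap] := eqVneq a 0.
  have -> : b = 0 by rewrite /b (@dotvv_eq0 v az) dotvC dotv0l.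
  by rewrite expr0n /= mulr_ge0 ?dotvv_ge0.
have ap' : 0 < a by rewrite lt_def ap a0.
have : 0 <= a * (a * dotv u u - b ^+ 2) by nra.
by rewrite pmulr_rge0 // subr_ge0 mulrC.
Qed.

Lemma cs u v : dotv u v <= enorm u * enorm v.
Proof.
have [h|h] := leP (dotv u v) 0.
  by apply: le_trans h _; rewrite mulr_ge0 ?enorm_ge0.
rewrite -ler_sqr ?nnegrE ?(ltW h) ?mulr_ge0 ?enorm_ge0 //.
by rewrite exprMn !enorm_sq cs_sq.
Qed.

Lemma cs_abs u v : `|dotv u v| <= enorm u * enorm v.
Proof.
rewrite ler_norml cs andbT lerNl -dotvNr.
by apply: le_trans (cs _ _) _; rewrite enormN.
Qed.

Lemma enormD u v : enorm (u + v) <= enorm u + enorm v.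
Proof.
rewrite -ler_sqr ?nnegrE ?addr_ge0 ?enorm_ge0 //.
rewrite enorm_sq !(dotvDl, dotvDr) sqrrD !enorm_sq (dotvC v u).
have := cs u v; lra.
Qed.

End Dot.



Section Norms.
Context {R : realType} {d : nat}.
Implicit Types (u v w : 'rV[R]_d) (a : R).

Lemma coord_le_mxn u i : `|u ord0 i| <= `|u|.
Proof.
rewrite [leRHS]/Num.Def.normr /= mx_normrE; apply/bigmax_geP; right => /=.
by exists (ord0, i).
Qed.

Lemma coord_le_enorm u i : `|u ord0 i| <= enorm u.
Proof.
rewrite -sqrtr_sqr /enorm ler_sqrt ?dotvv_ge0 // /dotv (bigD1 i) //= expr2.
by rewrite lerDl sumr_ge0 // => j _; rewrite -expr2 sqr_ge0.
Qed.

Lemma mxn_le_enorm u : `|u| <= enorm u.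
Proof.
rewrite [leLHS]/Num.Def.normr /= mx_normrE; apply/bigmax_leP; split => /=.
  exact: enorm_ge0.
by move=> [i j] _ /=; rewrite (ord1 i); apply: coord_le_enorm.
Qed.

Lemma enorm_le_mxn u : enorm u <= (d%:R + 1) * `|u|.
Proof.
have n0 : 0 <= `|u| by [].
rewrite -ler_sqr ?nnegrE ?enorm_ge0 ?mulr_ge0 ?addr_ge0 //.
rewrite enorm_sq /dotv.
apply: (@le_trans _ _ (\sum_(i < d) `|u|^+2)).
  apply: ler_sum => i _; rewrite -expr2 -real_normK ?num_real //.
  by rewrite ler_sqr ?nnegrE ?coord_le_mxn.
rewrite sumr_const card_ord exprMn -mulr_natl.
have := sqr_ge0 `|u|.
have h : 0 <= (d%:R : R) by [].
nra.
Qed.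

Lemma interiorP (B : set 'rV[R]_d) (a0 : 'rV[R]_d) :
  interior B a0 <-> exists2 r : R, 0 < r & forall y, enorm (y - a0) < r -> B y.
Proof.
split.
  move=> /nbhs_ballP [e e0 he]; exists e => // y hy; apply: he.
  rewrite -ball_normE /ball_ /= -normrN opprB.
  by apply: le_lt_trans (mxn_le_enorm _) hy.
move=> [r r0 hr]; apply/nbhs_ballP; exists (r / (d%:R + 1)).
  by rewrite /= divr_gt0 // ltr_wpDl.
move=> y; rewrite -ball_normE /ball_ /= -normrN opprB => hy; apply: hr.
apply: le_lt_trans (enorm_le_mxn _) _.
by rewrite mulrC -ltr_pdivlMr // ltr_wpDl.
Qed.

End Norms.



Section Conv.
Context {R : realType} {d : nat}.
Implicit Types (u v w : 'rV[R]_d) (a : R).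

Lemma convexP {B : set 'rV[R]_d} {x y t} : convex_set B -> B x -> B y ->
  0 <= t -> t <= 1 -> B (t *: x + (1 - t) *: y).
Proof.
move=> hB Bx By t0 t1.
have := hB x y (Itv01 t0 t1) (mem_set Bx) (mem_set By).
rewrite inE. done.
Qed.

Lemma interior_conv {B : set 'rV[R]_d} {p b t} : convex_set B -> interior B p -> B b ->
  0 < t -> t <= 1 -> interior B (t *: p + (1 - t) *: b).
Proof.
move=> hB /interiorP [r r0 hr] Bb t0 t1; apply/interiorP.
exists (t * r); first exact: mulr_gt0.
move=> y hy.
set q := t *: p + (1 - t) *: b.
have Bp' : B (p + t^-1 *: (y - q)).
  apply: hr; rewrite addrAC subrr add0r enormZ gtr0_norm ?invr_gt0 //.
  by rewrite mulrC ltr_pdivrMr // mulrC.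
have := convexP hB Bp' Bb (ltW t0) t1.
congr B; rewrite scalerDr scalerA mulfV ?gt_eqF // scale1r /q.
by rewrite opprD !addrA subrK (addrC (t *: p) y) addrK.
Qed.


Lemma near_interior {B : set 'rV[R]_d} {x s} : convex_set B -> interior B !=set0 ->
  B x -> 0 < s -> exists p, interior B p /\ enorm (p - x) < s.
Proof.
move=> hB [p0 ip0] Bx s0.
set E := enorm (p0 - x).
have E0 : 0 <= E by apply: enorm_ge0.
set t := Num.min 1 (s / (E + 1)).
have t0 : 0 < t by rewrite lt_min ltr01 divr_gt0 // ltr_wpDl.
have t1 : t <= 1 by rewrite ge_min lexx.
exists (t *: p0 + (1 - t) *: x); split; first exact: interior_conv.
have -> : t *: p0 + (1 - t) *: x - x = t *: (p0 - x).
  by rewrite scalerBl scale1r scalerBr addrA addrAC addrK.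
rewrite enormZ gtr0_norm // -/E.
have : t <= s / (E + 1) by rewrite ge_min lexx orbT.
rewrite ler_pdivlMr ?ltr_wpDl // => h.
have : t * E < s by nra.
done.
Qed.

Lemma segdiff p v a b : (p + a *: v) - (p + b *: v) = (a - b) *: v :> 'rV[R]_d.
Proof. by rewrite opprD addrACA subrr add0r -scalerBl. Qed.

Lemma bdry_seg {B : set 'rV[R]_d} {p y} : closed B -> convex_set B ->
  interior B p -> ~ interior B y ->
  exists l, 0 < l /\ l <= 1 /\ bdry B (p + l *: (y - p)).
Proof.
move=> cB hB ip niy.
set S := [set l : R | 0 <= l /\ l <= 1 /\ B (p + l *: (y - p))].
have Bp : B p by apply: nbhs_singleton.
have S0 : S 0 by rewrite /S /= lexx ler01 scale0r addr0.
have hS : has_sup S by split; [exists 0 | exists 1 => l [_ []]].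
set ls := sup S.
have ls0 : 0 <= ls by apply: sup_upper_bound.
have ls1 : ls <= 1 by apply: ge_sup; [exists 0 | move=> l [_ []]].
set z := p + ls *: (y - p).
set E := enorm (y - p).
have E0 : 0 <= E by apply: enorm_ge0.
have Bz : B z.
  rewrite (closure_id B).1 // => N /interiorP [r r0 hr].
  have eps0 : 0 < r / (E + 1) by rewrite divr_gt0 // ltr_wpDl.
  have [l [l0 [l1 Bl]] hl] := sup_adherent eps0 hS.
  have lls : l <= ls by apply: sup_upper_bound.
  exists (p + l *: (y - p)); split => //; apply: hr.
  rewrite /z segdiff enormZ -/E.
  rewrite ler0_norm ?subr_le0 // opprB.
  have : ls - l < r / (E + 1) by move: hl; rewrite -/ls; lra.
  rewrite ltr_pdivlMr ?ltr_wpDl // => h.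
  have : (ls - l) * E <= (ls - l) * (E + 1) by rewrite ler_wpM2l ?subr_ge0 ?lerDl.
  lra.
have niz : ~ interior B z.
  move=> /interiorP [r r0 hr].
  have [ls1'|ls1'] := eqVneq ls 1.
    have zy : z = y by rewrite /z ls1' scale1r addrC subrK.
    by apply: niy; rewrite -zy; apply/interiorP; exists r.
  have ltls1 : ls < 1 by rewrite lt_neqAle ls1' ls1.
  set m := Num.min (1 - ls) (r / (2 * (E + 1))).
  have m0 : 0 < m by rewrite lt_min subr_gt0 ltls1 divr_gt0 // mulr_gt0 // ltr_wpDl.
  have m1 : m <= 1 - ls by rewrite ge_min lexx.
  have m2 : m <= r / (2 * (E + 1)) by rewrite ge_min lexx orbT.
  have Sm : S (ls + m).
    split; first by lra. split; first by lra.
    apply: hr; rewrite /z segdiff enormZ -/E.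
    rewrite addrAC subrr add0r gtr0_norm //.
    move: m2; rewrite ler_pdivlMr ?mulr_gt0 ?ltr_wpDl // => m2.
    nra.
  have := sup_upper_bound hS Sm; rewrite -/ls; lra.
exists ls; split.
  rewrite lt_neqAle ls0 andbT; apply/eqP => ls00; apply: niz.
  by rewrite /z -ls00 scale0r addr0.
by split => //; split => //; apply: subset_closure.
Qed.

End Conv.



Section Approx.
Context {R : realType} {d : nat}.
Implicit Types (u v w : 'rV[R]_d) (a : R).

Lemma unit_dir u : u != 0 -> enorm ((enorm u)^-1 *: u) = 1.
Proof.
move=> u0; have e0 : enorm u != 0 by apply: contra u0 => /eqP/enorm_eq0 ->.
by rewrite enormZ ger0_norm ?invr_ge0 ?enorm_ge0 // mulVf.
Qed.

Lemma approx_normal (B : set 'rV[R]_d) x v : closed B -> convex_set B ->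
  interior B !=set0 -> smooth_boundary B -> B x -> enorm v = 1 ->
  (forall delta s, 0 < delta -> 0 < s -> exists y, y <> x /\ enorm (y - x) < s /\
     1 - delta <= dotv ((enorm (y - x))^-1 *: (y - x)) v /\ ~ interior B y) ->
  forall e, 0 < e -> exists z n, bdry B z /\ outer_normal B z n /\
     enorm (z - x) < e /\ - e <= dotv n v.
Proof.
move=> cB hB iB sB Bx v1 H e e0.
have [y [yx [yxs [yv niy]]]] := H (e ^+ 2 / 2) e ltac:(by rewrite divr_gt0 ?exprn_gt0) e0.
have [p [ip px]] := near_interior hB iB Bx e0.
have [l [l0 [l1 bz]]] := bdry_seg cB hB ip niy.
set z := p + l *: (y - p).
have [n [[n1 hn] _]] := sB _ bz.
have zx : enorm (z - x) < e.
  have -> : z - x = (1 - l) *: (p - x) + l *: (y - x).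
    by apply/rowP => i; rewrite /z !mxE; ring.
  apply: le_lt_trans (enormD _ _) _.
  rewrite !enormZ !ger0_norm ?subr_ge0 ?(ltW l0) //.
  have : 0 <= enorm (p - x) by apply: enorm_ge0.
  nra.
exists z, n; split => //; split; first by split.
split => //.
have Bp : B p by apply: nbhs_singleton.
have h1 := hn p Bp; have h2 := hn x Bx.
rewrite /z !(dotvBl, dotvDl, dotvZl, dotvNl) in h1 h2.
have YP : 0 <= dotv y n - dotv p n.
  by rewrite -(pmulr_rge0 _ l0); lra.
have hyx : 0 <= dotv (y - x) n.
  rewrite dotvBl; have : 0 <= (1 - l) * (dotv y n - dotv p n) by rewrite mulr_ge0 // subr_ge0.
  lra.
set u := (enorm (y - x))^-1 *: (y - x).
have yx0 : y - x != 0 by rewrite subr_eq0; apply/eqP.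
have u1 : enorm u = 1 by apply: unit_dir.
have un : 0 <= dotv u n by rewrite dotvZl mulr_ge0 ?invr_ge0 ?enorm_ge0.
have hvu : enorm (v - u) <= e.
  rewrite /enorm -(ger0_norm (ltW e0)) -sqrtr_sqr ler_sqrt ?sqr_ge0 //.
  rewrite !(dotvBl, dotvBr) -!enorm_sq v1 u1 (dotvC u v).
  move: yv; rewrite -/u (dotvC u v); lra.
have := cs_abs n (v - u); rewrite n1 mul1r ler_norml => /andP[hh _].
rewrite dotvBr (dotvC n u) in hh; lra.
Qed.

End Approx.



Section Limit.
Context {R : realType} {d : nat}.
Implicit Types (u v w : 'rV[R]_d) (a : R).

Lemma cluster_seq (nk : nat -> 'rV[R]_d) : (forall k, enorm (nk k) = 1) ->
  exists ns, forall N e, 0 < e -> exists k, (N <= k)%N /\ enorm (ns - nk k) < e.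
Proof.
move=> hn.
set A := closed_ball (0 : 'rV[R]_d) 1.
have AE : A = [set w | `|w| <= 1].
  rewrite /A closed_ballE //; apply/seteqP; by split => w; rewrite /closed_ball_ /= sub0r normrN.
have cA : compact A.
  apply: bounded_closed_compact; last exact: closed_ball_closed.
  rewrite AE; exists 1; split; first exact: num_real.
  by move=> M M1 w /= w1; apply: le_trans w1 (ltW M1).
have FA : (nk @ \oo) A.
  by exists 0%N => // k _ /=; rewrite AE /= (le_trans (mxn_le_enorm _)) // hn.
have [ns [_ cl]] := cA _ _ FA.
exists ns => N e e0.
have e0' : 0 < e / (d%:R + 1) by rewrite divr_gt0 // ltr_wpDl.
have FN : (nk @ \oo) (nk @` [set k | (N <= k)%N]).
  by apply: filterS (nbhs_infty_ge N) => k Nk; exists k.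
have [_ [[k Nk <-] hk]] := cl _ _ FN (nbhsx_ballx ns _ e0').
exists k; split => //.
apply: le_lt_trans (enorm_le_mxn _) _.
move: hk; rewrite -ball_normE /ball_ /= ltr_pdivlMr ?ltr_wpDl // mulrC.
done.
Qed.

End Limit.



Section Key.
Context {R : realType} {d : nat}.
Implicit Types (u v w : 'rV[R]_d) (a : R).

Lemma inv_small (e : R) : 0 < e -> forall k, (Num.trunc e^-1 <= k)%N -> k.+1%:R^-1 < e.
Proof.
move=> e0 k hk; rewrite -[e]invrK ltf_pV2 ?posrE ?invr_gt0 ?ltr0Sn //.
apply: lt_le_trans (truncnS_gt _) _; by rewrite ler_nat ltnS.
Qed.

Lemma lin_aux (A1 A2 A3 Z N1 E ee e K : R) : E * ee + ee = e -> K < ee -> A1 <= 0 ->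
  A2 <= Z -> A3 <= E * N1 -> Z < K -> N1 < ee -> E * N1 <= E * ee -> A1 + A2 + A3 <= 0 + e.
Proof. lra. Qed.

Lemma lin_aux2 (K N1 e a b : R) : K < e / 2 -> N1 < e / 2 -> - K <= b -> - N1 <= a - b -> 0 <= a + e.
Proof. lra. Qed.

Lemma limit_normal (B : set 'rV[R]_d) x v :
  (forall e, 0 < e -> exists z n, bdry B z /\ outer_normal B z n /\
     enorm (z - x) < e /\ - e <= dotv n v) ->
  enorm v = 1 ->
  exists ns, outer_normal B x ns /\ 0 <= dotv ns v.
Proof.
move=> H v1.
have H' : forall k : nat, exists zn : 'rV[R]_d * 'rV[R]_d,
  bdry B zn.1 /\ outer_normal B zn.1 zn.2 /\ enorm (zn.1 - x) < k.+1%:R^-1 /\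
  - k.+1%:R^-1 <= dotv zn.2 v.
  move=> k; have [z [n hzn]] := H (k.+1%:R^-1) ltac:(by rewrite invr_gt0 ltr0Sn).
  by exists (z, n).
have [f hf] := choice H'.
set nk := fun k => (f k).2.
set zk := fun k => (f k).1.
have nk1 : forall k, enorm (nk k) = 1 by move=> k; have [_ [[]]] := hf k.
have [ns hcl] := cluster_seq _ nk1.
have small : forall e, 0 < e -> exists k, k.+1%:R^-1 < e /\ enorm (ns - nk k) < e.
  move=> e e0; have [k [Nk hk]] := hcl (Num.trunc e^-1) e e0.
  by exists k; split => //; apply: inv_small.
exists ns; split; first split.
- apply/le_anti/andP; split.
    apply/ler_addgt0Pr => e e0; have [k [_ hk]] := small e e0.
    have := enormD (ns - nk k) (nk k); rewrite subrK nk1; lra.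
  rewrite -subr_ge0 -lerBlDr sub0r; apply/ler_addgt0Pr => e e0.
  have [k [_ hk]] := small e e0.
  have := enormD (nk k - ns) ns; rewrite subrK nk1 enormB; lra.
- move=> b Bb; apply/ler_addgt0Pr => e e0.
  set E := enorm (b - x).
  have E0 : 0 <= E by apply: enorm_ge0.
  have e0' : 0 < e / (E + 1) by rewrite divr_gt0 // ltr_wpDl.
  have [k [hk1 hk2]] := small _ e0'.
  have [_ [[_ hn] [hz _]]] := hf k.
  have h1 := hn b Bb.
  have h2 := cs (zk k - x) (nk k); rewrite nk1 mulr1 in h2.
  have h3 := cs (b - x) (ns - nk k).
  have -> : dotv (b - x) ns = dotv (b - zk k) (nk k) + dotv (zk k - x) (nk k)
      + dotv (b - x) (ns - nk k).
    rewrite -dotvDl dotvBr.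
    have -> : b - zk k + (zk k - x) = b - x by rewrite addrA subrK.
    by rewrite addrCA subrr addr0.
  have q2 : E * enorm (ns - nk k) <= E * (e / (E + 1)) by rewrite ler_wpM2l // ltW.
  rewrite -/E -/(zk k) -/(nk k) in h1 h2 h3 hz *.
  apply: lin_aux; last exact: q2; [|exact: hk1|exact: h1|exact: h2|exact: h3|exact: hz|exact: hk2].
  by rewrite -[X in _ + X]mul1r -mulrDl mulrC mulfVK // gt_eqF // ltr_wpDl.
- apply/ler_addgt0Pr => e e0.
  have e0' : 0 < e / 2 by rewrite divr_gt0.
  have [k [hk1 hk2]] := small _ e0'.
  have [_ [_ [_ hv]]] := hf k.
  have h3 := cs_abs (ns - nk k) v; rewrite v1 mulr1 ler_norml dotvBl in h3.
  rewrite -/(nk k) in hv; move: h3 => /andP[h3 _].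
  apply: lin_aux2; last exact: h3; [exact: hk1|exact: hk2|exact: hv].
Qed.

End Key.



Section Key2.
Context {R : realType} {d : nat}.
Implicit Types (u v w : 'rV[R]_d) (a : R).

Lemma key_cone (B : set 'rV[R]_d) x nB v : closed B -> convex_set B ->
  interior B !=set0 -> smooth_boundary B -> bdry B x -> outer_normal B x nB ->
  enorm v = 1 -> dotv v nB < 0 ->
  exists delta s, 0 < delta /\ 0 < s /\ forall y, y <> x -> enorm (y - x) < s ->
    1 - delta <= dotv ((enorm (y - x))^-1 *: (y - x)) v -> interior B y.
Proof.
move=> cB hB iB sB bx nx v1 vn.
apply: contrapT => Hn.
have Bx : B x by rewrite (closure_id B).1 //; case: bx.
have H : forall delta s, 0 < delta -> 0 < s -> exists y, y <> x /\ enorm (y - x) < s /\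
     1 - delta <= dotv ((enorm (y - x))^-1 *: (y - x)) v /\ ~ interior B y.
  move=> delta s d0 s0; apply: contrapT => hno; apply: Hn.
  exists delta, s; split => //; split => // y yx ys yv.
  apply: contrapT => niy; apply: hno; exists y; split => //.
have [ns [nsx nsv]] := limit_normal _ _ _ (approx_normal _ _ _ cB hB iB sB Bx v1 H) v1.
have [n0 [_ hu]] := sB x bx.
have e1 := hu _ nsx; have e2 := hu _ nx.
move: nsv; rewrite -e1 e2 dotvC; lra.
Qed.

End Key2.

Theorem lemma2p16 (R : realType) (d : nat) (B C : set 'rV[R]_d) (x nB nC : 'rV[R]_d) :
  closed B -> convex_set B -> interior B !=set0 -> smooth_boundary B ->
  closed C -> convex_set C -> interior C !=set0 -> smooth_boundary C ->
  B `&` C !=set0 ->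
  bdry B x -> bdry C x ->
  outer_normal B x nB -> outer_normal C x nC -> nB <> nC ->
  exists a : 'rV[R]_d,
    interior B a /\ dotv (a - x) nC > 0 /\
    exists delta s : R, 0 < delta /\ delta <= 2 /\ 0 < s /\
      cone_s x ((enorm (a - x))^-1 *: (a - x)) delta s `<=` interior B `|` [set x] /\
      cone_s x (- ((enorm (a - x))^-1 *: (a - x))) delta s `<=` interior C `|` [set x].
Proof.
move=> cB hB iB sB cC hC iC sC _ bxB bxC [nB1 hnB] [nC1 hnC] nBC.
set w := nC - nB.
have w0 : w != 0 by rewrite subr_eq0; apply/eqP => h; apply: nBC.
set v := (enorm w)^-1 *: w.
have v1 : enorm v = 1 by apply: unit_dir.
have ew : 0 < enorm w.
  rewrite lt_def enorm_ge0 andbT; apply: contra w0 => /eqP/enorm_eq0 ->. done.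
have hw2 : enorm w ^+ 2 = 2 - 2 * dotv nB nC.
  rewrite enorm_sq /w !(dotvBl, dotvBr) -!enorm_sq nB1 nC1 (dotvC nC nB); ring.
have vnB : dotv v nB < 0.
  rewrite /v dotvZl /w dotvBl -enorm_sq nB1 (dotvC nC nB).
  rewrite pmulr_rlt0 ?invr_gt0 //.
  have : 0 < enorm w ^+ 2 by rewrite exprn_gt0.
  lra.
have vnC : 0 < dotv v nC.
  rewrite /v dotvZl /w dotvBl -enorm_sq nC1.
  rewrite pmulr_rgt0 ?invr_gt0 //.
  have : 0 < enorm w ^+ 2 by rewrite exprn_gt0.
  lra.
have [d1 [s1 [d10 [s10 hB1]]]] := key_cone _ _ _ _ cB hB iB sB bxB (conj nB1 hnB) v1 vnB.
have mv1 : enorm (- v) = 1 by rewrite enormN.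
have mvnC : dotv (- v) nC < 0 by rewrite dotvNl oppr_lt0.
have [d2 [s2 [d20 [s20 hC1]]]] := key_cone _ _ _ _ cC hC iC sC bxC (conj nC1 hnC) mv1 mvnC.
set t := s1 / 2.
have t0 : 0 < t by rewrite divr_gt0.
set a := x + t *: v.
have ax : a - x = t *: v by rewrite /a addrAC subrr add0r.
have eax : enorm (a - x) = t by rewrite ax enormZ gtr0_norm // v1 mulr1.
have dir : (enorm (a - x))^-1 *: (a - x) = v.
  by rewrite eax ax scalerA mulVf ?gt_eqF // scale1r.
exists a; split.
  apply: hB1.
  - by move=> h; move: eax; rewrite h subrr enorm0 => h0; move: t0; rewrite -h0 ltxx.
  - by rewrite eax /t; lra.
  - by rewrite dir -enorm_sq v1 expr1n lerBlDr lerDl ltW.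
split.
  by rewrite ax dotvZl mulr_gt0.
rewrite dir.
exists (Num.min d1 (Num.min d2 2)), (Num.min s1 s2).
split; first by rewrite !lt_min d10 d20 ltr0Sn.
split; first by rewrite !ge_min lexx !orbT.
split; first by rewrite lt_min s10 s20.
split.
  move=> y [[->|[yx hy]] hs]; first by right.
  left; apply: hB1 => //.
    by apply: lt_le_trans hs _; rewrite /eball /= ge_min lexx.
  by apply: le_trans hy; rewrite lerD2l lerN2 ge_min lexx.
move=> y [[->|[yx hy]] hs]; first by right.
left; apply: hC1 => //.
  by apply: lt_le_trans hs _; rewrite /eball /= ge_min lexx orbT.
by apply: le_trans hy; rewrite lerD2l lerN2 !ge_min lexx !orbT.
Qed.
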